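(* For all $u_1, \ldots, u_n \in \mathcal{L}_s$, there exists a unique subset $\{v_1, \ldots, v_m\} \subseteq \{u_1, \ldots, u_n\}$ such that $\max(u_1, \ldots, u_n) =_{\mathcal{L}} \max(v_1, \ldots, v_m)$ and $\max(v_1, \ldots, v_m) \in \mathcal{L}_r$.
   Context: $\mathcal{X}$ is a countable set of variables; a valuation is $\sigma\colon\mathcal{X}\to\mathbb{N}$. For finite $E\subseteq\mathcal{X}$, $x\in\mathcal{X}$, $S\in\mathbb{N}$, the sublevels $A(E,x,S)$ and $B(E,S)$ have values $[A(E,x,S)]_\sigma = 0$ if some $y\in E$ has $\sigma(y)=0$, and $\sigma(x)+S$ otherwise; $[B(E,S)]_\sigma=0$ if some $y\in E$ has $\sigma(y)=0$, and $S$ otherwise. $\mathcal{L}_s$ is the set of sublevels $A(E,x,S)$ with $x\in E$ and $B(E,S)$ with $S>0$. $t_1\leqslant_{\mathcal{L}} t_2$ (resp. $t_1 =_{\mathcal{L}} t_2$) means $[t_1]_\sigma\le[t_2]_\sigma$ (resp. $=$) for every valuation $\sigma$; $\max$ of a finite family is evaluated pointwise (empty max has value $0$). Two sublevels $u,v$ are incomparable if neither $u\leqslant_{\mathcal{L}} v$ nor $v\leqslant_{\mathcal{L}} u$. A minimal representation is a formal expression $\max(v_1,\ldots,v_m)$ where $\{v_1,\ldots,v_m\}$ is a finite set of pairwise incomparable elements of $\mathcal{L}_s$; $\mathcal{L}_r$ is the set of minimal representations. *)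

(* Defs.v *)
From HB Require Import structures.
From mathcomp Require Import all_boot.
From mathcomp Require Import finmap.
Set Implicit Arguments. Unset Strict Implicit. Unset Printing Implicit Defensive.


Definition valuation := nat -> nat.

(* Sublevels: SA E x S is A(E,x,S), SB E S is B(E,S). *)
Inductive sublevel :=
| SA of {fset nat} & nat & nat
| SB of {fset nat} & nat.

Definition sublevel_code (u : sublevel) : option nat * {fset nat} * nat :=
  match u with
  | SA E x s => (Some x, E, s)
  | SB E s => (None, E, s)
  end.
Definition sublevel_decode (c : option nat * {fset nat} * nat) : sublevel :=
  match c with
  | (Some x, E, s) => SA E x s
  | (None, E, s) => SB E s
  end.
Lemma sublevel_codeK : cancel sublevel_code sublevel_decode.
Proof. by case. Qed.
HB.instance Definition _ := Equality.copy sublevel (can_type sublevel_codeK).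

Definition eval (t : sublevel) (sigma : valuation) : nat :=
  match t with
  | SA E x s => if [exists y : E, sigma (val y) == 0] then 0 else sigma x + s
  | SB E s => if [exists y : E, sigma (val y) == 0] then 0 else s
  end.

Definition in_Ls (t : sublevel) : Prop :=
  match t with
  | SA E x s => x \in E
  | SB E s => 0 < s
  end.

Definition le_L (t1 t2 : sublevel) : Prop :=
  forall sigma : valuation, eval t1 sigma <= eval t2 sigma.

Definition incomparable (u v : sublevel) : Prop := ~ le_L u v /\ ~ le_L v u.

(* pointwise value of max of a finite family (empty max = 0) *)
Definition eval_max (U : seq sublevel) (sigma : valuation) : nat :=
  \max_(u <- U) eval u sigma.

Definition eq_max (U V : seq sublevel) : Prop :=
  forall sigma : valuation, eval_max U sigma = eval_max V sigma.

(* max(V) is a minimal representation, i.e. V (as a set) is a finite set of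
   pairwise incomparable elements of L_s *)
Definition in_Lr (V : seq sublevel) : Prop :=
  (forall v, v \in V -> in_Ls v) /\
  (forall v w, v \in V -> w \in V -> v != w -> incomparable v w).

(* Main.v *)
Require Import Defs.
From mathcomp Require Import all_boot finmap.
From mathcomp Require Import zify.
From Stdlib Require Import ClassicalEpsilon.
Set Implicit Arguments. Unset Strict Implicit.


Lemma zeroP (E : {fset nat}) (s : valuation) :
  reflect (exists2 y, y \in E & s y = 0) [exists y : E, s (val y) == 0].
Proof.
apply: (iffP existsP) => [[y /eqP h]|[y hy h]].
  by exists (val y) => //; apply: fsvalP.
by exists (FSetSub hy); rewrite /= h.
Qed.

Definition supp (u : sublevel) : {fset nat} :=
  match u with SA E _ _ => E | SB E _ => E end.

Lemma eval_supp u s : eval u s = 0 \/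
  ((forall y, y \in supp u -> s y <> 0) /\ eval u s =
     match u with SA _ x k => s x + k | SB _ k => k end).
Proof.
case: u => [E x k|E k] /=; case: zeroP => [_|h]; auto;
right; split => // y hy hs; apply: h; by exists y.
Qed.

Lemma eval_pos u s : in_Ls u -> (forall y, y \in supp u -> s y <> 0) -> 0 < eval u s.
Proof.
case: u => [E x k|E k] /= hu hs; (case: zeroP => [[y hy h]|_];
  [by case: (hs y hy)|]) => //.
by have := hs x hu; case: (s x).
Qed.

Lemma eval_zero u s y : y \in supp u -> s y = 0 -> eval u s = 0.
Proof.
case: u => [E x k|E k] /= hy hs; case: zeroP => // [[]]; by exists y.
Qed.

Definition sig1 (y : nat) : valuation := fun z => (z != y) : nat.

Lemma le_supp u v : in_Ls u -> le_L u v -> {subset supp v <= supp u}.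
Proof.
move=> hu le y hy; apply/negPn/negP => hn.
have := le (sig1 y); rewrite (@eval_zero v _ y hy) ?/sig1 ?eqxx //.
rewrite leqn0 => /eqP; apply/eqP; rewrite -lt0n; apply: eval_pos => // z hz.
rewrite /sig1; case: eqP => // ez; by rewrite -ez hz in hn.
Qed.

Lemma eval_nz u s : (forall y, y \in supp u -> s y <> 0) ->
  eval u s = match u with SA _ x k => s x + k | SB _ k => k end.
Proof.
move=> h; case: (eval_supp u s) => [|[]//]; case: u h => [E x k|E k] /= h;
case: zeroP => // [[y hy]] /(h y hy) //.
Qed.

Lemma antisym u v : in_Ls u -> in_Ls v -> le_L u v -> le_L v u -> u = v.
Proof.
move=> hu hv le1 le2.
have eE : supp u = supp v.
  by apply/fsetP => y; apply/idP/idP => h; [exact: (le_supp hv le2 h)|exact: (le_supp hu le1 h)].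
have one : forall y, y \in supp u -> (fun _ => 1) y <> 0 by [].
have one' : forall y, y \in supp v -> (fun _ => 1) y <> 0 by [].
have := le1 (fun _ => 1); have := le2 (fun _ => 1).
rewrite (eval_nz one) (eval_nz one').
case: u v hu hv le1 le2 eE one one' => [E x k|E k] [E' x' k'|E' k'] /= hu hv le1 le2 eE _ _.
- move=> l1 l2; have ek : k = k' by apply/eqP; rewrite eqn_leq -(leq_add2l 1) l2 -(leq_add2l 1) l1.
  subst k'; subst E'; case: (eqVneq x x') => [->//|nx].
  pose s := fun z => if z == x then k.+2 else 1.
  have h1 : forall y, y \in E -> s y <> 0 by move=> y _; rewrite /s; case: eqP.
  have h2 : forall y, y \in E -> s y <> 0 by move=> y _; rewrite /s; case: eqP.
  have := le1 s; rewrite (@eval_nz (SA E x k) s h1) (@eval_nz (SA E x' k) s h2) /s eqxx.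
  rewrite eq_sym (negPf nx) => /= ?; exfalso; lia.
- move=> _ _.
  pose s := fun z : nat => k'.+1.
  have h1 : forall y, y \in E -> s y <> 0 by [].
  have := le1 s; rewrite (@eval_nz (SA E x k) s h1) /s /=.
  case: ifP => _ /= ?; exfalso; lia.
- move=> _ _.
  pose s := fun z : nat => k.+1.
  have h1 : forall y, y \in E' -> s y <> 0 by [].
  have := le2 s; rewrite (@eval_nz (SA E' x' k') s h1) /s /=.
  case: ifP => _ /= ?; exfalso; lia.
- move=> l1 l2; have -> : k = k' by apply/eqP; rewrite eqn_leq l1 l2.
  by rewrite eE.
Qed.

Definition cst (u : sublevel) := match u with SA _ _ k => k | SB _ k => k end.

Lemma witness v W s : eval v s <= eval_max W s -> 0 < eval v s ->
  exists2 w, w \in W & eval v s <= eval w s.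
Proof.
move=> le pos; case: (boolP (has (fun w => eval v s <= eval w s) W)) => [/hasP[w ? ?]|/hasPn h].
  by exists w.
exfalso; have : eval_max W s <= (eval v s).-1.
  apply/bigmax_leqP_seq => w wW _; have := h w wW; rewrite -ltnNge; lia.
lia.
Qed.

Lemma nz_supp w s : 0 < eval w s -> forall y, y \in supp w -> s y <> 0.
Proof. by case: (eval_supp w s) => [->//|[]]. Qed.

Lemma join_prime v W : in_Ls v -> (forall w, w \in W -> in_Ls w) ->
  (forall s, eval v s <= eval_max W s) -> exists2 w, w \in W & le_L v w.
Proof.
move=> hv hW le.
case: v hv le => [E x k|E k] hv le; rewrite /= in hv.
- set m := \max_(w <- W) cst w.
  pose M := m + k + 2.
  pose s := fun z => if z \in E then (if z == x then M else 1) else 0.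
  have sE : forall y, y \in E -> s y <> 0 by move=> y hy; rewrite /s hy; case: eqP => _ //; rewrite /M; lia.
  have ev : eval (SA E x k) s = M + k by rewrite (@eval_nz (SA E x k) s sE) /s hv eqxx.
  have [w wW lew] := witness (le s) (ltac:(rewrite ev; lia)).
  have pos : 0 < eval w s by move: lew; rewrite ev; lia.
  have sub := nz_supp pos.
  have cw : cst w <= m by rewrite /m; apply: leq_bigmax_seq.
  move: lew; rewrite ev (eval_nz sub).
  case: w wW sub cw pos => [E' x' k'|E' k'] wW sub /= cw pos; last by rewrite /M; lia.
  case: (eqVneq x' x) => [ex|nx]; last first.
    have : s x' <= 1 by rewrite /s (negPf nx); case: (x' \in E).
    lia.
  subst x'; rewrite /s hv eqxx => lk.
  exists (SA E' x k') => // t.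
  case: (eval_supp (SA E x k) t) => [->//|[nt ->]].
  have nt' : forall y, y \in supp (SA E' x k') -> t y <> 0.
    move=> y hy; apply: nt => /=; have := sub y hy; rewrite /s; by case: (y \in E).
  rewrite (eval_nz nt'); lia.
- pose s := fun z => (z \in E) : nat.
  have sE : forall y, y \in E -> s y <> 0 by move=> y hy; rewrite /s hy.
  have ev : eval (SB E k) s = k by rewrite (@eval_nz (SB E k) s sE).
  have [w wW lew] := witness (le s) (ltac:(rewrite ev; lia)).
  have pos : 0 < eval w s by move: lew; rewrite ev; lia.
  have sub := nz_supp pos.
  have subE : forall y, y \in supp w -> y \in E.
    by move=> y hy; have := sub y hy; rewrite /s; case: (y \in E).
  exists w => // t.
  case: (eval_supp (SB E k) t) => [->//|[nt ->]].
  have nt' : forall y, y \in supp w -> t y <> 0 by move=> y hy; apply: nt; apply: subE.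
  move: lew; rewrite ev (eval_nz sub) (eval_nz nt').
  have := hW w wW.
  case: w wW sub subE pos nt' => [E' x' k'|E' k'] //= wW sub subE pos nt' hx.
  have := nt' x' hx; rewrite /s (subE x' hx) /=; lia.
Qed.

Definition leb u v : bool := if excluded_middle_informative (le_L u v) then true else false.
Lemma lebP u v : reflect (le_L u v) (leb u v).
Proof. rewrite /leb; case: excluded_middle_informative => h; by constructor. Qed.

Lemma le_trans u v w : le_L u v -> le_L v w -> le_L u w.
Proof. move=> h1 h2 s; exact: leq_trans (h1 s) (h2 s). Qed.

Lemma le_max u U s : u \in U -> eval u s <= eval_max U s.
Proof. move=> uU; exact: (leq_bigmax_seq _ uU). Qed.

Lemma count_lt (T : eqType) (a b : pred T) (s : seq T) x :
  subpred a b -> x \in s -> b x -> ~~ a x -> count a s < count b s.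
Proof.
move=> sab; elim: s => //= y s IH; rewrite inE => /orP[/eqP<-|xs] bx nax.
  rewrite bx (negPf nax) /= add0n add1n ltnS; exact: sub_count.
have := IH xs bx nax; case ay: (a y); first by rewrite (sab _ ay); lia.
case: (b y); lia.
Qed.

Definition maxb (U : seq sublevel) v := all (fun w => leb v w ==> (w == v)) U.

Lemma above U : (forall u, u \in U -> in_Ls u) ->
  forall u, u \in U -> exists2 v, v \in U & maxb U v && leb u v.
Proof.
move=> hU u uU.
move: {2}(count (fun w => leb u w && (w != u)) U) (leqnn (count (fun w => leb u w && (w != u)) U)) => n.
elim: n u uU => [|n IH] u uU hc.
- exists u => //; apply/andP; split; last by apply/lebP.
  apply/allP => w wU; apply/implyP => lw; apply/negPn/negP => nw.
  have : 0 < count (fun w => leb u w && (w != u)) U.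
    by rewrite -has_count; apply/hasP; exists w => //; rewrite lw.
  lia.
- case: (boolP (maxb U u)) => [mu|/allPn[w wU]].
    by exists u => //; rewrite mu; apply/lebP.
  rewrite negb_imply => /andP[/lebP luw nwu].
  have hlt : count (fun z => leb w z && (z != w)) U < count (fun w => leb u w && (w != u)) U.
    apply: (count_lt (x := w)) => //; last by rewrite eqxx andbF.
    - move=> z /andP[/lebP lwz nzw]; apply/andP; split; first by apply/lebP; exact: le_trans luw lwz.
      apply/negP => /eqP ezu; subst z.
      by move: nwu; rewrite (antisym (hU _ uU) (hU _ wU) luw lwz) eqxx.
    - by rewrite nwu andbT; apply/lebP.
  have [v vU /andP[mv /lebP lwv]] := IH w wU (ltac:(lia)).
  exists v => //; rewrite mv; apply/lebP; exact: le_trans luw lwv.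
Qed.

Theorem proposition34 (U : seq sublevel) :
  (forall u, u \in U -> in_Ls u) ->
  exists V : seq sublevel,
    [/\ {subset V <= U}, eq_max U V, in_Lr V &
        forall W : seq sublevel,
          {subset W <= U} -> eq_max U W -> in_Lr W -> W =i V].
Proof.
move=> hU; exists (filter (maxb U) U).
have subV : {subset filter (maxb U) U <= U} by move=> v; rewrite mem_filter => /andP[].
have maxV : forall v, v \in filter (maxb U) U -> forall w, w \in U -> le_L v w -> w = v.
  move=> v; rewrite mem_filter => /andP[/allP mv _] w wU lvw.
  by apply/eqP; move: (mv w wU) => /implyP; apply; apply/lebP.
have inV : forall v, v \in U -> maxb U v -> v \in filter (maxb U) U.
  by move=> v vU mv; rewrite mem_filter mv.
have eqm : eq_max U (filter (maxb U) U).
  move=> s; apply/eqP; rewrite eqn_leq; apply/andP; split.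
  - apply/bigmax_leqP_seq => u uU _.
    have [v vU /andP[mv /lebP luv]] := above hU uU.
    exact: leq_trans (luv s) (le_max s (inV v vU mv)).
  - apply/bigmax_leqP_seq => v vV _; exact: le_max (subV v vV).
split => //.
- split; first by move=> v /subV; apply: hU.
  move=> v w vV wV nvw; split => h.
    by move: nvw; rewrite (maxV v vV w (subV w wV) h) eqxx.
  by move: nvw; rewrite (maxV w wV v (subV v vV) h) eqxx.
- move=> W subW eqW [LW IW] x; apply/idP/idP => hx.
  + have xU := subW x hx.
    have [v vU /andP[mv /lebP lxv]] := above hU xU.
    have [w wW lvw] : exists2 w, w \in W & le_L v w.
      apply: join_prime (hU v vU) LW _ => s; rewrite -eqW; exact: le_max.
    have exw : x = w.
      apply/eqP; apply/negPn/negP => nxw.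
      by case: (IW x w hx wW nxw) => + _; apply; exact: le_trans lxv lvw.
    subst w.
    by rewrite (antisym (hU _ xU) (hU _ vU) lxv lvw); apply: inV.
  + have xU := subV x hx.
    have [w wW lxw] : exists2 w, w \in W & le_L x w.
      apply: join_prime (hU x xU) LW _ => s; rewrite -eqW; exact: le_max.
    by rewrite -(maxV x hx w (subW w wW) lxw).
Qed.
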